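(* Let $(S,\Delta,\mathbb{P})$ be a probability space, $(U,d)$ a separable metric space, $\mathfrak{X}$ the set of $U$-valued random variables on $S$, $\mathcal{I}$ an ideal on $\mathbb{N}$, $r\geq 0$, and $\{X_n\}_{n\in\mathbb{N}}$ a sequence in $\mathfrak{X}$. Then the set $\mathcal{I}^{\mathbb{P}}\text{-}LIM^rX_i$ is closed in $(\mathfrak{X}^0,\rho)$.
   Context: The Ky Fan metric is $\rho(X,Y)=\inf\{\varepsilon>0:\mathbb{P}(d(X,Y)>\varepsilon)\leq\varepsilon\}$; $\mathfrak{X}^0$ is the set of equivalence classes of $\mathfrak{X}$ under almost sure equality, on which $\rho$ is a metric. An ideal on $\mathbb{N}$ is a family $\mathcal{I}\subseteq\mathcal{P}(\mathbb{N})$ with $\varnothing\in\mathcal{I}$, closed under finite unions and under subsets. A sequence $\{X_n\}$ in $\mathfrak{X}$ is rough $\mathcal{I}$-convergent in probability to $X_*\in\mathfrak{X}$ with degree of roughness $r$ if $\{n\in\mathbb{N}:\mathbb{P}(d(X_n,X_* )>r+\varepsilon)>\delta\}\in\mathcal{I}$ for every $\varepsilon,\delta>0$; $\mathcal{I}^{\mathbb{P}}\text{-}LIM^rX_i$ denotes the set of all such $X_*$. *)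

(* Defs.v *)
From mathcomp Require Import all_boot all_order all_algebra.
From mathcomp Require Import all_classical all_reals all_analysis.
Set Implicit Arguments. Unset Strict Implicit. Unset Printing Implicit Defensive.
Import Order.TTheory GRing.Theory Num.Theory.
Local Open Scope classical_set_scope.
Local Open Scope ring_scope.

Definition is_metric {R : realType} {U : Type} (dist : U -> U -> R) : Prop :=
  (forall x y, 0 <= dist x y) /\
  (forall x y, dist x y = 0 <-> x = y) /\
  (forall x y, dist x y = dist y x) /\
  (forall x y z, dist x z <= dist x y + dist y z).

Definition separable_metric {R : realType} {U : Type} (dist : U -> U -> R) : Prop :=
  exists D : set U, countable D /\
    forall x (e : R), 0 < e -> exists y, D y /\ dist x y < e.

Definition metric_open {R : realType} {U : Type} (dist : U -> U -> R) (A : set U) : Prop :=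
  forall x, A x -> exists e : R, 0 < e /\ forall y, dist x y < e -> A y.

Definition is_rv {R : realType} {d : measure_display} {S : measurableType d}
  {U : Type} (dist : U -> U -> R) (X : S -> U) : Prop :=
  forall B : set U, <<s metric_open dist >> B -> measurable (X @^-1` B).

Definition is_ideal (I : set (set nat)) : Prop :=
  I set0 /\
  (forall A B, I A -> I B -> I (A `|` B)) /\
  (forall A B, B `<=` A -> I A -> I B).

Definition kyfan {R : realType} {d : measure_display} {S : measurableType d}
  (P : probability S R) {U : Type} (dist : U -> U -> R) (X Y : S -> U) : R :=
  inf [set e : R | 0 < e /\ (P [set s | (e < dist (X s) (Y s))%R] <= e%:E)%E].

Definition rough_I_conv {R : realType} {d : measure_display} {S : measurableType d}
  (P : probability S R) {U : Type} (dist : U -> U -> R) (I : set (set nat))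
  (r : R) (X : nat -> S -> U) (Xs : S -> U) : Prop :=
  forall eps delta : R, 0 < eps -> 0 < delta ->
    I [set n | (delta%:E < P [set s | (r + eps < dist (X n s) (Xs s))%R])%E].

Definition rough_I_LIM {R : realType} {d : measure_display} {S : measurableType d}
  (P : probability S R) {U : Type} (dist : U -> U -> R) (I : set (set nat))
  (r : R) (X : nat -> S -> U) : set (S -> U) :=
  [set Y | is_rv dist Y /\ rough_I_conv P dist I r X Y].

(* Main.v *)
Require Import Defs.
From mathcomp Require Import all_boot all_order all_algebra.
From mathcomp Require Import all_classical all_reals all_analysis.
From mathcomp Require Import lra.
Import Order.TTheory GRing.Theory Num.Theory.
Local Open Scope classical_set_scope.
Local Open Scope ring_scope.

Lemma small_inv (R : realType) (a : R) : 0 < a -> exists k : nat, (k.+1%:R)^-1 < a.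
Proof.
move=> a0; exists (Num.truncn a^-1).
rewrite invf_plt ?posrE ?ltr0Sn //; exact: truncnS_gt.
Qed.

Lemma open_ball1 (R : realType) (U : Type) (dist : U -> U -> R)
  (Hmet : is_metric dist) (q : U) (t : R) :
  metric_open dist [set x | dist x q < t].
Proof.
have [dpos [deq [dsym dtri]]] := Hmet.
move=> x /= hx; exists (t - dist x q); split; first by rewrite subr_gt0.
move=> y hy; have := dtri y x q; rewrite (dsym y x) => h; lra.
Qed.

Lemma open_ball2 (R : realType) (U : Type) (dist : U -> U -> R)
  (Hmet : is_metric dist) (q : U) (a : R) :
  metric_open dist [set y | a < dist q y].
Proof.
have [dpos [deq [dsym dtri]]] := Hmet.
move=> y /= hy; exists (dist q y - a); split; first by rewrite subr_gt0.
move=> z hz; have := dtri q z y; rewrite (dsym z y) => h; lra.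
Qed.

Lemma meas_dist_gt (R : realType) (d : measure_display) (S : measurableType d)
  (U : Type) (dist : U -> U -> R) (Hmet : is_metric dist)
  (Hsep : separable_metric dist) (X Y : S -> U) :
  is_rv dist X -> is_rv dist Y -> forall c : R,
  measurable [set s | c < dist (X s) (Y s)].
Proof.
move=> hX hY c.
have [dpos [deq [dsym dtri]]] := Hmet.
case: Hsep => D [cD dD].
have /countable_injP [f finj] := cD.
pose t (k : nat) : R := (k.+1%:R)^-1.
have tpos : forall k, 0 < t k by move=> k; rewrite /t invr_gt0 ltr0Sn.
pose F k q := X @^-1` [set x | dist x q < t k] `&` Y @^-1` [set y | c + t k < dist q y].
pose g k m := [set s | exists q, [/\ D q, f q = m & F k q s]].
have -> : [set s | c < dist (X s) (Y s)] = \bigcup_k \bigcup_m g k m.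
  apply/seteqP; split => s /=.
  - move=> hc.
    have hp : 0 < (dist (X s) (Y s) - c) / 2 by apply: divr_gt0; lra.
    have [k hk] := @small_inv _ _ hp.
    have [q [Dq hq]] := dD (X s) (t k) (tpos k).
    exists k => //; exists (f q) => //; exists q; split => //; split => //=.
    have := dtri (X s) q (Y s); rewrite -/(t k) in hk => h; lra.
  - case=> k _ [m _ [q [Dq _ [h1 h2]]]] /=.
    move: h1 h2 => /= h1 h2.
    have := dtri q (X s) (Y s); rewrite (dsym q (X s)) => h; lra.
apply: bigcupT_measurable => k; apply: bigcupT_measurable => m.
have [[q [Dq fq]]|nq] := pselect (exists q, D q /\ f q = m).
  have -> : g k m = F k q.
    apply/seteqP; split => s /=.
    - case=> q' [Dq' fq' h]; have qq : q' = q.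
        by apply: finj; rewrite ?inE //; rewrite fq fq'.
      by rewrite -qq.
    - by move=> h; exists q; split.
  apply: measurableI.
  - apply: hX; apply: sub_sigma_algebra; exact: open_ball1.
  - apply: hY; apply: sub_sigma_algebra; exact: open_ball2.
have -> : g k m = set0.
  apply/seteqP; split => s //= [q [Dq fq _]]; by apply: nq; exists q; split.
exact: measurable0.
Qed.

Arguments small_inv {R a}.
Arguments meas_dist_gt {R d S U dist} Hmet Hsep {X Y}.

Theorem theorem2p2 (R : realType) (d : measure_display) (S : measurableType d)
  (P : probability S R) (U : Type) (dist : U -> U -> R)
  (Hmet : is_metric dist) (Hsep : separable_metric dist)
  (I : set (set nat)) (HI : is_ideal I) (r : R) (Hr : 0 <= r)
  (X : nat -> S -> U) (HX : forall n, is_rv dist (X n)) :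
  forall Y : S -> U, is_rv dist Y ->
    (forall e : R, 0 < e ->
       exists Z, rough_I_LIM P dist I r X Z /\ kyfan P dist Z Y < e) ->
    rough_I_LIM P dist I r X Y.
Proof.
move=> Y hY H; split => // eps delta eps0 delta0.
have [dpos [deq [dsym dtri]]] := Hmet.
case: HI => [I0 [IU Isub]].
have e00 : 0 < Num.min (eps/2) (delta/2).
  by rewrite lt_min; apply/andP; split; apply: divr_gt0.
have [Z [[hZ cZ] kZ]] := H _ e00.
have ne : [set e : R | 0 < e /\ (P [set s | (e < dist (Z s) (Y s))%R] <= e%:E)%E] !=set0.
  exists 1; split => //; apply: probability_le1; exact: meas_dist_gt.
have [e [e0 Pe] elt] := inf_lt ne kZ.
move: elt; rewrite lt_min => /andP [e1 e2].
have IN := cZ (eps/2) (delta/2) (divr_gt0 eps0 (ltr0Sn _ 1)) (divr_gt0 delta0 (ltr0Sn _ 1)).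
apply: Isub IN => n /= hn.
rewrite ltNge; apply/negP => hle.
have mA := meas_dist_gt Hmet Hsep (HX n) hY (r + eps).
have mB := meas_dist_gt Hmet Hsep (HX n) hZ (r + eps/2).
have mC := meas_dist_gt Hmet Hsep hZ hY e.
have sub : [set s | r + eps < dist (X n s) (Y s)] `<=`
    [set s | r + eps/2 < dist (X n s) (Z s)] `|` [set s | e < dist (Z s) (Y s)].
  move=> s /= h; have := dtri (X n s) (Z s) (Y s) => ht.
  case: (ltP (r + eps/2) (dist (X n s) (Z s))) => h'; [left|right] => //; lra.
have hA : (P [set s | (r + eps < dist (X n s) (Y s))%R] <=
    P [set s | (r + eps/2 < dist (X n s) (Z s))%R] + P [set s | (e < dist (Z s) (Y s))%R])%E.
  have mBC := measurableU _ _ mB mC.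
  have hs := @le_measure _ _ _ P _ _ (mem_set mA) (mem_set mBC) sub.
  apply: (le_trans hs).
  exact: measureU2.
have := lt_le_trans hn (le_trans hA (leeD hle Pe)).
rewrite -EFinD lte_fin => h; lra.
Qed.
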